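(* Let $1<p<\infty$. The sequence space $h_p$, with norm $\|x\|_{h_p}=\big(\sum_{k=1}^\infty|k\,\Delta x_k|^p\big)^{1/p}$, has the $AD$ property, i.e. the set $\phi$ of finitely nonzero sequences is dense in $h_p$.
   Context: Sequences are complex sequences $x=(x_k)_{k\ge1}$, and $\Delta x_k=x_k-x_{k+1}$. For $1<p<\infty$, $$h_p=\Big\{x:\ \sum_{k=1}^{\infty}(k|\Delta x_k|)^p<\infty,\ \lim_k x_k=0\Big\}.$$ $\phi$ denotes the set of all sequences with only finitely many nonzero terms. *)

(* Defs.v *)
From Stdlib Require Import Reals.
From Coquelicot Require Import Coquelicot.
Open Scope R_scope.

(* Sequences x = (x_k)_{k>=1} are represented as x : nat -> C; the value
   x 0 is a junk entry that is never used (all indices below are k >= 1). *)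

(* a^q for a >= 0, with the convention 0^q = 0 (q > 0). *)
Definition rpow (a q : R) : R := if Rlt_dec 0 a then Rpower a q else 0.

Definition Delta (x : nat -> C) (k : nat) : C := (x k - x (S k))%C.

(* the n-th term (n >= 0) of sum_{k>=1} (k |Delta x_k|)^p, with k = n+1 *)
Definition hp_term (p : R) (x : nat -> C) (n : nat) : R :=
  rpow (INR (S n) * Cmod (Delta x (S n))) p.

Definition in_hp (p : R) (x : nat -> C) : Prop :=
  ex_series (hp_term p x) /\ is_lim_seq (fun k => Cmod (x k)) 0.

Definition hp_norm (p : R) (x : nat -> C) : R :=
  rpow (Series (hp_term p x)) (1 / p).

Definition in_phi (y : nat -> C) : Prop :=
  exists N : nat, forall k : nat, (N <= k)%nat -> y k = 0%C.

Definition seq_sub (x y : nat -> C) : nat -> C := fun k => (x k - y k)%C.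

(* Main.v *)
Require Import Defs.
From Stdlib Require Import Reals Lra Lia.
From Coquelicot Require Import Coquelicot.
Open Scope R_scope.

Ltac ceq := apply injective_projections; unfold Cminus, Cplus, Copp, RtoC; simpl; lra.

Lemma rpow_0 (q : R) : rpow 0 q = 0.
Proof. unfold rpow; destruct (Rlt_dec 0 0); [lra|reflexivity]. Qed.

Lemma rpow_ge0 (a q : R) : 0 <= rpow a q.
Proof. unfold rpow; destruct (Rlt_dec 0 a); [apply Rlt_le, exp_pos|lra]. Qed.

Lemma ex_series_zero : ex_series (fun _ : nat => 0).
Proof.
  apply (@ex_series_le R_AbsRing R_CompleteNormedModule _ (fun n => (/2)^n)).
  - intros n. change (Rabs 0 <= (/2)^n). rewrite Rabs_R0. apply pow_le. lra.
  - apply ex_series_geom. rewrite Rabs_pos_eq; lra.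
Qed.

Lemma ex_series_ev0 (a : nat -> R) (N : nat) :
  (forall n, (N <= n)%nat -> a n = 0) -> ex_series a.
Proof.
  intros H. apply (proj2 (ex_series_incr_n a N)).
  apply (ex_series_ext (fun _ => 0)); [|apply ex_series_zero].
  intros n. symmetry. apply H. lia.
Qed.

Theorem corollary2p4 (p : R) (hp1 : 1 < p) :
  (forall y : nat -> C, in_phi y -> in_hp p y) /\
  (forall x : nat -> C, in_hp p x ->
     forall eps : R, 0 < eps ->
       exists y : nat -> C, in_phi y /\ hp_norm p (seq_sub x y) < eps).
Proof.
  split.
  - intros y [N HN]. split.
    + apply (ex_series_ev0 _ N). intros n Hn. unfold hp_term; unfold Defs.Delta.
      rewrite (HN (S n)) by lia. rewrite (HN (S (S n))) by lia.
      replace (Cmod _) with 0.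
      * rewrite Rmult_0_r. apply rpow_0.
      * rewrite <- Cmod_0. f_equal. ceq.
    + apply (is_lim_seq_incr_n _ N).
      apply (is_lim_seq_ext (fun _ => 0)); [|apply is_lim_seq_const].
      intros n. rewrite (HN (n + N)%nat) by lia. now rewrite Cmod_0.
  - intros x [Hs Hl] eps Heps.
    set (a := hp_term p x).
    pose proof (proj1 (is_series_Reals a (Series a)) (Series_correct a Hs)) as Hinf.
    assert (Hep : 0 < Rpower eps p) by apply exp_pos.
    destruct (Hinf _ Hep) as [M0 HM0].
    set (M := S M0).
    set (N := S M).
    set (y := fun k => if (k <? N)%nat then (x k - x N)%C else 0%C).
    exists y. split.
    + exists N. intros k Hk. unfold y. destruct (Nat.ltb_spec k N); [lia|reflexivity].
    + assert (Hz : forall n, hp_term p (seq_sub x y) n = if (M <=? n)%nat then a n else 0).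
      { intros n. unfold hp_term, a, Defs.Delta, Defs.seq_sub, y.
        destruct (Nat.leb_spec M n).
        - destruct (Nat.ltb_spec (S n) N); [unfold N in *; lia|].
          destruct (Nat.ltb_spec (S (S n)) N); [unfold N in *; lia|].
unfold hp_term, Defs.Delta;           match goal with |- rpow (_ * Cmod ?u) _ = rpow (_ * Cmod ?v) _ =>
            replace u with v by (ceq) end; reflexivity.
        - destruct (Nat.ltb_spec (S n) N); [|unfold N in *; lia].
          match goal with |- rpow (_ * Cmod ?u) _ = _ => replace u with (RtoC 0) end.
          + rewrite Cmod_0, Rmult_0_r. apply rpow_0.
          + destruct (Nat.ltb_spec (S (S n)) N).
            * ceq.
            * assert (E : S (S n) = N) by (unfold N in *; lia). rewrite E.
              ceq. }
      assert (Hex : ex_series (hp_term p (seq_sub x y))).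
      { apply (proj2 (ex_series_incr_n _ M)).
        apply (ex_series_ext (fun k => a (M + k)%nat)).
        - intros k. rewrite Hz. destruct (Nat.leb_spec M (M + k)); [reflexivity|lia].
        - apply (proj1 (ex_series_incr_n a M) Hs). }
      assert (Hser : Series (hp_term p (seq_sub x y)) = Series a - sum_f_R0 a M0).
      { rewrite (Series_incr_n a M) by (unfold M; lia || exact Hs).
        rewrite (Series_incr_n _ M) by (unfold M; lia || exact Hex).
        replace (Init.Nat.pred M) with M0 by reflexivity.
        assert (Hsum : forall m, (m < M)%nat -> sum_f_R0 (hp_term p (seq_sub x y)) m = 0).
        { induction m; intros Hm; simpl.
          - rewrite Hz. destruct (Nat.leb_spec M 0); [lia|reflexivity].
          - rewrite IHm by lia. rewrite Hz. destruct (Nat.leb_spec M (S m)); [lia|lra]. }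
        rewrite Hsum by (unfold M; lia).
        rewrite (Series_ext _ (fun k => a (M + k)%nat)); [lra|].
        intros k. rewrite Hz. destruct (Nat.leb_spec M (M + k)); [reflexivity|lia]. }
      assert (Htail : Series (hp_term p (seq_sub x y)) < Rpower eps p).
      { rewrite Hser. specialize (HM0 M0 (le_n _)). unfold R_dist in HM0.
        apply Rabs_def2 in HM0. lra. }
      unfold hp_norm, rpow.
      destruct (Rlt_dec 0 (Series (hp_term p (seq_sub x y)))); [|lra].
      assert (E : Rpower (Rpower eps p) (1/p) = eps).
      { rewrite Rpower_mult. replace (p * (1/p)) with 1 by (field; lra).
        apply Rpower_1; lra. }
      rewrite <- E.
      apply Rlt_Rpower_l; [apply Rdiv_lt_0_compat; lra | lra].
Qed.
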